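(* For all $n \ge 5$, \[ w(n,1) = w(n-2,1) + w(n-3,0) - 1, \] where $w(m,k)$ is the number of compositions of $m$ with all parts in $\{1,2\}$ having exactly $k$ water cells.
   Context: A composition of $n \ge 0$ is a finite sequence $(c_1,\dots,c_t)$ of positive integers with $c_1+\cdots+c_t=n$; the empty composition is the unique composition of $0$. Let $C_{12}(n)$ be the set of compositions of $n$ all of whose parts lie in $\{1,2\}$. The number of water cells of a composition $(c_1,\dots,c_t)$ is $\sum_{i=1}^{t} \max\bigl(0, \min(\max_{j \le i} c_j, \max_{j \ge i} c_j) - c_i\bigr)$ (the number of unit squares that would hold water poured over its bargraph, in which column $i$ has height $c_i$). For $n,k \ge 0$, $W(n,k)$ is the set of compositions in $C_{12}(n)$ with exactly $k$ water cells and $w(n,k)=|W(n,k)|$. *)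

(* Defs.v *)
From mathcomp Require Import all_boot.
Set Implicit Arguments. Unset Strict Implicit. Unset Printing Implicit Defensive.

Fixpoint seqs12 (m : nat) : seq (seq nat) :=
  match m with
  | 0 => [:: [::]]
  | m'.+1 => [seq x :: s | x <- [:: 1; 2], s <- seqs12 m']
  end.

(* C_{12}(n): compositions of n with all parts in {1,2}; each such
   composition has at most n parts. *)
Definition C12 (n : nat) : seq (seq nat) :=
  [seq s <- flatten [seq seqs12 m | m <- iota 0 n.+1] | sumn s == n].

(* max_{j <= i} c_j and max_{j >= i} c_j (0-based index i) *)
Definition lmax (c : seq nat) (i : nat) : nat := foldr maxn 0 (take i.+1 c).
Definition rmax (c : seq nat) (i : nat) : nat := foldr maxn 0 (drop i c).

(* number of water cells:
   sum_i max(0, min(lmax i, rmax i) - c_i)  (truncated nat subtraction) *)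
Definition water (c : seq nat) : nat :=
  sumn [seq minn (lmax c i) (rmax c i) - nth 0 c i | i <- iota 0 (size c)].

Definition w (n k : nat) : nat := count (fun c => water c == k) (C12 n).

(* Main.v *)
Require Import Defs.
From mathcomp Require Import all_boot zify.

Fixpoint W (x : nat) (s : seq nat) : nat :=
  match s with
  | [::] => 0
  | y :: t => minn (maxn x y) (maxn y (foldr maxn 0 t)) - y + W (maxn x y) t
  end.

Lemma W_gen s x :
  sumn [seq minn (maxn x (lmax s i)) (rmax s i) - nth 0 s i | i <- iota 0 (size s)] = W x s.
Proof.
elim: s x => [|y t IH] x //=.
rewrite -(IH (maxn x y)) /lmax /rmax /= take0 /= maxn0.
congr (_ + _).
rewrite (iotaDl 1 0) -map_comp; apply: congr1; apply: eq_map => i /=.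
by rewrite /lmax /rmax /= maxnA.
Qed.

Lemma water_W s : water s = W 0 s.
Proof.
rewrite -W_gen /water; congr sumn; apply: eq_map => i.
by rewrite max0n.
Qed.

Fixpoint D (n : nat) : seq (seq nat) :=
  match n with
  | 0 => [:: [::]]
  | n'.+1 => map (cons 1) (D n') ++
             match n' with 0 => [::] | n''.+1 => map (cons 2) (D n'') end
  end.

Lemma D_SS n : D n.+2 = map (cons 1) (D n.+1) ++ map (cons 2) (D n).
Proof. by []. Qed.

Definition all12 (s : seq nat) := all (fun x => (x == 1) || (x == 2)) s.

Lemma mem_map_cons (a : nat) (L : seq (seq nat)) u :
  (u \in map (cons a) L) = if u is x :: t then (x == a) && (t \in L) else false.
Proof.
elim: L => [|v L IH] /=; first by case: u => // x t; rewrite in_nil andbF.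
rewrite in_cons IH; move: IH; case: u => [|x t] //= _.
by rewrite eqseq_cons; case: (x == a).
Qed.

Lemma mem_D s n : (s \in D n) = all12 s && (sumn s == n).
Proof.
elim: s n => [|x t IH] [|n] //=.
- by rewrite mem_cat mem_map_cons; case: n => //= n; rewrite mem_map_cons.
- rewrite in_cons in_nil orbF /=.
  by case: x => [|[|[|x]]] //=; case: (all12 t); rewrite //= ?andbF; lia.
- rewrite mem_cat mem_map_cons IH.
  case: n => [|n].
  + rewrite in_nil orbF.
    case: x => [|[|[|x]]] //=; case: (all12 t); rewrite /= ?andbF //; lia.
  + rewrite mem_map_cons IH.
    case: x => [|[|[|x]]] //=; case: (all12 t); rewrite /= ?andbF //; lia.
Qed.

Lemma uniq_D n : uniq (D n) && uniq (D n.+1).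
Proof.
elim: n => [|n /andP [IH1 IH2]] //.
rewrite IH2 D_SS cat_uniq !map_inj_uniq; try by move=> a b [].
rewrite IH1 IH2 andbT /=.
apply/hasPn => u; rewrite mem_map_cons; case: u => // x t /andP [/eqP -> _].
by rewrite mem_map_cons.
Qed.

Lemma mem_seqs12 s m : (s \in seqs12 m) = all12 s && (size s == m).
Proof.
elim: s m => [|x t IH] [|m] //=.
- by rewrite cats0 mem_cat !mem_map_cons.
- by rewrite andbF.
- rewrite cats0 mem_cat !mem_map_cons !IH.
  by rewrite eqSS; case: (x == 1); case: (x == 2); case: (all12 t); case: (size t == m).
Qed.

Lemma size_sumn s : all12 s -> size s <= sumn s.
Proof. elim: s => //= x t IH /andP [Hx /IH]; move: Hx; lia. Qed.

Lemma mem_C12 s n : (s \in C12 n) = all12 s && (sumn s == n).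
Proof.
rewrite /C12 mem_filter andbC.
case: (boolP (all12 s)) => H.
  case: (boolP (sumn s == n)) => Hs; rewrite ?andbF ?andbT //.
  move/eqP: Hs => Hs.
  apply/flattenP; exists (seqs12 (size s)); last by rewrite mem_seqs12 H eqxx.
  apply/mapP; exists (size s) => //; rewrite mem_iota.
  by rewrite -Hs add0n ltnS size_sumn.
apply/negP => /andP [/flattenP [L /mapP [m _ ->]]]; rewrite mem_seqs12.
by rewrite (negbTE H).
Qed.

Lemma uniq_flat k : uniq (flatten [seq seqs12 m | m <- iota 0 k]).
Proof.
elim: k => [|k IH] //.
rewrite -addn1 iotaD map_cat flatten_cat cat_uniq IH /= cats0.
apply/andP; split.
  apply/hasPn => s; rewrite mem_seqs12 => /andP [_ /eqP Hs].
  apply/negP => /flattenP [L /mapP [m]]; rewrite mem_iota => Hm -> .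
  by rewrite mem_seqs12 => /andP [_ /eqP]; lia.
elim: k {IH} => [|k IH] //=.
rewrite cats0 cat_uniq !map_inj_uniq; try by move=> a b [].
rewrite IH andbT /=; apply/hasPn => u; rewrite mem_map_cons; case: u => // x t /andP [/eqP -> _].
by rewrite mem_map_cons.
Qed.

Lemma count_C12 P n : count P (C12 n) = count P (D n).
Proof.
apply/permP: P; apply: uniq_perm.
- by rewrite filter_uniq // uniq_flat.
- by case/andP: (uniq_D n).
- by move=> s; rewrite mem_C12 mem_D.
Qed.

Definition M (s : seq nat) := foldr maxn 0 s.

Lemma M_le2 s : all12 s -> M s <= 2.
Proof. elim: s => //= x t IH /andP [Hx /IH]; rewrite /M /= -/(M t); move: Hx; lia. Qed.

Lemma W01 s : all12 s -> W 1 s = W 0 s.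
Proof. case: s => //= y t /andP [Hy _]; have -> : maxn 1 y = maxn 0 y by move: Hy; lia. by []. Qed.

Lemma W21 s : all12 s -> W 2 (1 :: s) = (1 < M s) + W 2 s.
Proof. move=> /M_le2; rewrite /= -/(M s) => H. have -> : maxn 2 1 = 2 by []. congr (_ + _); lia. Qed.

Lemma W22 s : W 2 (2 :: s) = W 2 s.
Proof. rewrite /= -/(M s). have -> : maxn 2 2 = 2 by []. lia. Qed.

Lemma W01c s : W 0 (1 :: s) = W 1 s.
Proof. rewrite /= -/(M s). have -> : maxn 0 1 = 1 by []. lia. Qed.

Lemma W02c s : W 0 (2 :: s) = W 2 s.
Proof. rewrite /= -/(M s). have -> : maxn 0 2 = 2 by []. lia. Qed.

Lemma M_small s : all12 s -> M s < 2 -> W 2 s = 0.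
Proof.
elim: s => //= y t IH /andP [Hy Ht]; rewrite /M /= -/(M t) => H.
have -> : y = 1 by move: Hy H; lia.
rewrite -/(W 2 (1 :: t)) W21 // IH //; lia.
Qed.

Lemma M1 s : M (1 :: s) = maxn 1 (M s). Proof. by []. Qed.
Lemma M2 s : M (2 :: s) = maxn 2 (M s). Proof. by []. Qed.

Lemma cD P n : count P (D n.+2) =
  count (fun s => P (1 :: s)) (D n.+1) + count (fun s => P (2 :: s)) (D n).
Proof. by rewrite D_SS count_cat !count_map. Qed.

Lemma all12D s n : s \in D n -> all12 s.
Proof. by rewrite mem_D => /andP []. Qed.

Definition O n := count (fun s => M s < 2) (D n).
Definition Z n := count (fun s => W 2 s == 0) (D n).
Definition Y n := count (fun s => (1 < M s) && (W 2 s == 0)) (D n).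
Definition G n := count (fun s => W 2 s == 1) (D n).
Definition A k n := count (fun s => W 0 s == k) (D n).

Lemma O_S n : O n.+1 = 1.
Proof.
elim: n => [|n IH] //.
rewrite /O cD.
have -> : count (fun s => M (1 :: s) < 2) (D n.+1) = O n.+1.
  apply: eq_count => s /=; rewrite -/(M s); apply/idP/idP; lia.
rewrite IH (eq_count (a2 := pred0)) ?count_pred0 // => s /=; rewrite -/(M s); lia.
Qed.

Lemma Z_SS n : Z n.+2 = 1 + Z n.
Proof.
rewrite /Z cD.
have -> : count (fun s => W 2 (1 :: s) == 0) (D n.+1) = O n.+1.
  apply: eq_in_count => s /all12D H; rewrite W21 //.
  case: (ltnP 1 (M s)) => h /=; first by rewrite add1n ltnNge h.
  by rewrite M_small // ltnS h.
rewrite O_S; congr (_ + _).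
by apply: eq_count => s; rewrite W22.
Qed.

Lemma Y_SS n : Y n.+2 = Z n.
Proof.
rewrite /Y cD.
have -> : count (fun s => (1 < M (1 :: s)) && (W 2 (1 :: s) == 0)) (D n.+1) = 0.
  rewrite (eq_in_count (a2 := pred0)) ?count_pred0 // => s /all12D H.
  rewrite W21 // M1 /=; case: (ltnP 1 (M s)) => h /=; last by [].
  by rewrite h.
apply: eq_count => s; rewrite W22 M2; have -> : 1 < maxn 2 (M s) by lia.
by [].
Qed.

Lemma G_SS n : G n.+2 = Y n.+1 + G n.
Proof.
rewrite /G /Y cD; congr (_ + _).
  apply: eq_in_count => s /all12D H; rewrite W21 //.
  case: (ltnP 1 (M s)) => h /=; first by rewrite add1n eqSS.
  by rewrite M_small // ltnS h.
by apply: eq_count => s; rewrite W22.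
Qed.

Lemma A_SS k n : A k n.+2 = A k n.+1 + count (fun s => W 2 s == k) (D n).
Proof.
rewrite /A cD; congr (_ + _).
  by apply: eq_in_count => s /all12D H; rewrite W01c W01.
by apply: eq_count => s; rewrite W02c.
Qed.

Lemma key0 : G 3 + G 2 + 1 = A 0 2.
Proof. vm_compute. reflexivity. Qed.
Lemma key m : G m.+3 + G m.+2 + 1 = A 0 m.+2.
Proof.
elim: m => [|m IH]; first exact: key0.
rewrite (G_SS m.+2) Y_SS A_SS -/(Z m.+1) -IH.
clear IH; move: (Z m.+1) (G m.+2) (G m.+3) => a b c; lia.
Qed.
Lemma wA n k : w n k = A k n.
Proof.
rewrite /w count_C12 /A; apply: eq_count => s; by rewrite water_W.
Qed.

Theorem theorem2p3 (n : nat) : 5 <= n ->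
  w n 1 + 1 = w (n - 2) 1 + w (n - 3) 0.
Proof.
move=> Hn; have [m ->] : exists m, n = m.+4.+1 by exists (n - 5); lia.
rewrite !wA.
have -> : m.+4.+1 - 2 = m.+3 by lia.
have -> : m.+4.+1 - 3 = m.+2 by lia.

rewrite (A_SS 1 m.+3) (A_SS 1 m.+2) -/(G m.+3) -/(G m.+2) -(key m).
move: (A 1 m.+3) (G m.+2) (G m.+3) => a b c; lia.
Qed.
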